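(* Let $G$ be an $n$-resource selection game. Then $h^s_j=h^{s'}_j$ for every $j\in[n]$ and every two Nash equilibria $s,s'$ of $G$.
   Context: Write $[n]=\{1,\ldots,n\}$ and $\mathbb{R}_{\ge}=[0,\infty)$. An $n$-resource selection game is a pair $G=\bigl((f_j)_{j=1}^n;(\mu^{R})_{\emptyset\ne R\subseteq[n]}\bigr)$ where each $f_j:\mathbb{R}_{\ge}\to\mathbb{R}$ is nondecreasing (not necessarily continuous) and $\mu^R\in\mathbb{R}_{\ge}$ for every nonempty $R\subseteq[n]$. A consumption profile is a map $s$ assigning to each nonempty $R\subseteq[n]$ a vector $s(R)\in\mathbb{R}_{\ge}^{[n]}$ with $s_j(R)=0$ for $j\notin R$ and $\sum_{j}s_j(R)=\mu^R$. The load of resource $j$ is $\mu^s_j=\sum_{R}s_j(R)$ and its cost is $h^s_j=f_j(\mu^s_j)$. $s$ is a Nash equilibrium if for every nonempty $R$, every $k$ with $s_k(R)>0$ and every $j\in R$, $h^s_k\le h^s_j$. *)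

(* Defs.v *)
(* Reals are modelled by an arbitrary real field R
   (the statement is order-algebraic; it then holds in particular for the reals). *)
From HB Require Import structures.
From mathcomp Require Import all_boot all_order all_algebra.
Set Implicit Arguments. Unset Strict Implicit. Unset Printing Implicit Defensive.
Import Order.TTheory GRing.Theory Num.Theory.
Local Open Scope ring_scope.

(* Resources are 'I_n (i.e. [n] shifted to {0,..,n-1}); a subset R of [n] is a {set 'I_n}. *)

Definition is_game (R : realFieldType) (n : nat)
    (f : 'I_n -> R -> R) (mu : {set 'I_n} -> R) : Prop :=
  (forall j x y, 0 <= x -> x <= y -> f j x <= f j y) /\
  (forall S : {set 'I_n}, S != set0 -> 0 <= mu S).

Definition is_profile (R : realFieldType) (n : nat)
    (mu : {set 'I_n} -> R) (s : {set 'I_n} -> 'I_n -> R) : Prop :=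
  forall S : {set 'I_n}, S != set0 ->
    (forall j, 0 <= s S j) /\
    (forall j, j \notin S -> s S j = 0) /\
    (\sum_(j < n) s S j = mu S).

Definition load (R : realFieldType) (n : nat)
    (s : {set 'I_n} -> 'I_n -> R) (j : 'I_n) : R :=
  \sum_(S : {set 'I_n} | S != set0) s S j.

Definition cost (R : realFieldType) (n : nat) (f : 'I_n -> R -> R)
    (s : {set 'I_n} -> 'I_n -> R) (j : 'I_n) : R :=
  f j (load s j).

Definition is_nash (R : realFieldType) (n : nat) (f : 'I_n -> R -> R)
    (mu : {set 'I_n} -> R) (s : {set 'I_n} -> 'I_n -> R) : Prop :=
  is_profile mu s /\
  forall (S : {set 'I_n}) (k j : 'I_n), S != set0 -> 0 < s S k -> j \in S ->
    cost f s k <= cost f s j.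

(* Main.v *)
Require Import Defs.
From HB Require Import structures.
From mathcomp Require Import all_boot all_order all_algebra.
Import Order.TTheory GRing.Theory Num.Theory.
Local Open Scope ring_scope.

Lemma half (R : realFieldType) (n : nat)
    (f : 'I_n -> R -> R) (mu : {set 'I_n} -> R)
    (s s' : {set 'I_n} -> 'I_n -> R) :
  is_game f mu -> is_nash f mu s -> is_nash f mu s' ->
  forall j : 'I_n, cost f s j <= cost f s' j.
Proof.
move=> [fmon _] [ps ns] [ps' ns'] j0.
rewrite leNgt; apply/negP => Hj0.
pose A := [pred j : 'I_n | cost f s' j < cost f s j].
have loadge0 : forall t, is_profile mu t -> forall j, 0 <= load t j.
  move=> t pt j; rewrite /load; apply: sumr_ge0 => S HS.
  by have [H _] := pt S HS.
have Hlt : forall j, A j -> load s' j < load s j.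
  move=> j; rewrite /A /= => Hj; rewrite ltNge; apply/negP => Hle.
  have := fmon j _ _ (loadge0 _ ps j) Hle.
  by rewrite /cost in Hj *; rewrite leNgt Hj.
have Hsum : \sum_(j < n | A j) load s' j < \sum_(j < n | A j) load s j.
  apply: ltr_sum => //; apply/hasP; exists j0 => //; exact: mem_index_enum.
have Hle : \sum_(j < n | A j) load s j <= \sum_(j < n | A j) load s' j.
  rewrite /load exchange_big /= [X in _ <= X]exchange_big /=.
  apply: ler_sum => S HS.
  have [s0 [sout ssum]] := ps S HS.
  have [s0' [sout' ssum']] := ps' S HS.
  case: (boolP [exists k, A k && (0 < s S k)]) => [/existsP [k /andP [Hk Hkpos]]|Hno].
  have kS : k \in S.
    by apply: contraTT Hkpos => /sout ->; rewrite ltxx.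
  have Hz : forall l, ~~ A l -> s' S l = 0.
    move=> l Hl; apply/eqP; rewrite eq_le s0' andbT leNgt; apply/negP=> Hlpos.
    have lS : l \in S by apply: contraTT Hlpos => /sout' ->; rewrite ltxx.
    have h1 := ns S k l HS Hkpos lS.
    have h2 := ns' S l k HS Hlpos kS.
    move: Hl; rewrite /A /= -leNgt => Hl.
    move: Hk; rewrite /A /= => Hk.
    have := lt_le_trans Hk (le_trans h1 (le_trans Hl h2)).
    by rewrite ltxx.
  have E1 : \sum_(i < n) s' S i = \sum_(i < n | A i) s' S i.
    rewrite (bigID A) /= [X in _ + X]big1 ?addr0 //.
  have E2 : \sum_(i < n) s S i = \sum_(i < n | A i) s S i + \sum_(i < n | ~~ A i) s S i.
    by rewrite (bigID A).
  have H3 : 0 <= \sum_(i < n | ~~ A i) s S i by apply: sumr_ge0.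
  have : \sum_(i < n | A i) s S i <= \sum_(i < n | A i) s' S i.
    by rewrite -E1 ssum' -ssum E2 lerDl.
  by [].
have Hz : forall i, A i -> s S i = 0.
  move=> i Hi; apply/eqP; rewrite eq_le s0 andbT leNgt; apply/negP=> Hpos.
  by move/negP: Hno; apply; apply/existsP; exists i; rewrite Hi Hpos.
have : \sum_(i < n | A i) s S i <= \sum_(i < n | A i) s' S i.
  by rewrite big1 //; apply: sumr_ge0.
by [].
by move: (lt_le_trans Hsum Hle); rewrite ltxx.
Qed.

Theorem mainTheorem2 (R : realFieldType) (n : nat)
    (f : 'I_n -> R -> R) (mu : {set 'I_n} -> R)
    (s s' : {set 'I_n} -> 'I_n -> R) :
  is_game f mu -> is_nash f mu s -> is_nash f mu s' ->
  forall j : 'I_n, cost f s j = cost f s' j.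
Proof.
move=> G N N' j; apply/eqP; rewrite eq_le.
by rewrite (half _ _ _ _ _ _ G N N' j) (half _ _ _ _ _ _ G N' N j).
Qed.
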